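(* Let $\alpha_1,\alpha_2,\alpha_3:\mathbb N\to[0,\infty)$ be non-negative, bounded and increasing functions with $\alpha_1(0)=\alpha_2(0)=\alpha_3(0)=0$ and $\lim_{c\to\infty}(\alpha_1(c)+\alpha_2(c))<1$, and let $\lambda>0$. Consider the equation $w(c)=\min\{\alpha_1(c)w(c+1)+\alpha_2(c)w(c-1)+\alpha_3(c);\ \lambda\},\qquad c\in\mathbb N,\qquad(\ast)$ where the term $\alpha_2(0)w(-1)$ is taken to be $0$. Then: (a) equation $(\ast)$ has exactly one bounded solution $w:\mathbb N\to\mathbb R$; (b) let $\zeta_j=\lim_{c\to\infty}\alpha_j(c)$ for $j=1,2,3$ and $\lambda^*=\frac{\zeta_3}{1-\zeta_1-\zeta_2}$. If $\lambda<\lambda^*$, then there is $c^*\in\mathbb N$, $c^*\ge1$, such that the first term $\alpha_1(c)w(c+1)+\alpha_2(c)w(c-1)+\alpha_3(c)$ in the minimum in $(\ast)$ (with $w$ the bounded solution) is strictly bigger than $\lambda$ if and only if $c\ge c^*$. If $\lambda\ge\lambda^*$, then this first term is not bigger than $\lambda$, and hence equals $w(c)$, for all $c\in\mathbb N$. *)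

(* Defs.v *)
From Stdlib Require Import Reals Lra Lia.
Open Scope R_scope.

Definition first_term (a1 a2 a3 : nat -> R) (w : nat -> R) (c : nat) : R :=
  a1 c * w (S c) + (match c with O => 0 | S c' => a2 c * w c' end) + a3 c.

Definition solves (a1 a2 a3 : nat -> R) (lam : R) (w : nat -> R) : Prop :=
  forall c : nat, w c = Rmin (first_term a1 a2 a3 w c) lam.

Definition bounded_seq (w : nat -> R) : Prop :=
  exists M : R, forall c : nat, Rabs (w c) <= M.

Definition admissible_coef (a : nat -> R) : Prop :=
  (forall c, 0 <= a c) /\ bounded_seq a /\
  (forall c d : nat, (c <= d)%nat -> a c <= a d) /\ a O = 0.

(* Main.v *)
Require Import Defs.
From Stdlib Require Import Reals Lra Lia Wf_nat Classical FunctionalExtensionality.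
Open Scope R_scope.

Lemma rabs_btw x K : Rabs x <= K -> -K <= x <= K.
Proof. unfold Rabs; destruct (Rcase_abs x); lra. Qed.

Lemma rmin_lip a b m : Rabs (Rmin a m - Rmin b m) <= Rabs (a - b).
Proof.
  unfold Rmin; destruct (Rle_dec a m); destruct (Rle_dec b m);
  unfold Rabs; repeat destruct Rcase_abs; lra.
Qed.

Lemma cv_shift u l : Un_cv u l -> Un_cv (fun n => u (S n)) l.
Proof. intros H e he; destruct (H e he) as [N HN]; exists N; intros n hn; apply HN; lia. Qed.

Lemma cv_const a : Un_cv (fun _ => a) a.
Proof. intros e he; exists 0%nat; intros; unfold R_dist; rewrite Rminus_eq_0, Rabs_R0; lra. Qed.

Lemma cv_le u l M : Un_cv u l -> (forall n, u n <= M) -> l <= M.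
Proof.
  intros H HM; destruct (Rle_dec l M) as [|n]; auto; exfalso.
  destruct (H (l - M)) as [N HN]; [lra|].
  specialize (HN N (le_n _)); unfold R_dist in HN; apply Rabs_def2 in HN.
  specialize (HM N); lra.
Qed.

Lemma cv_le2 u v l1 l2 : Un_cv u l1 -> Un_cv v l2 -> (forall n, u n <= v n) -> l1 <= l2.
Proof.
  intros Hu Hv H. assert (l1 - l2 <= 0); [|lra].
  apply (cv_le (fun n => u n - v n)); [apply CV_minus; auto|intro n; specialize (H n); lra].
Qed.

Lemma cv_rmin u l m : Un_cv u l -> Un_cv (fun n => Rmin (u n) m) (Rmin l m).
Proof.
  intros H e he; destruct (H e he) as [N HN]; exists N; intros n hn.
  specialize (HN n hn); unfold R_dist in *.
  eapply Rle_lt_trans; [apply rmin_lip|exact HN].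
Qed.

Section S.
Variables (a1 a2 a3 : nat -> R) (lam : R).
Hypothesis p1 : forall c, 0 <= a1 c.
Hypothesis p2 : forall c, 0 <= a2 c.
Hypothesis p3 : forall c, 0 <= a3 c.
Hypothesis i1 : forall c, a1 c <= a1 (S c).
Hypothesis i2 : forall c, a2 c <= a2 (S c).
Hypothesis i3 : forall c, a3 c <= a3 (S c).
Hypothesis hlam : 0 < lam.

Definition T (w : nat -> R) : nat -> R := fun c => Rmin (first_term a1 a2 a3 w c) lam.

Fixpoint it (n : nat) : nat -> R :=
  match n with O => fun _ => 0 | S n => T (it n) end.

Lemma ft_mono v w c : (forall c, v c <= w c) -> first_term a1 a2 a3 v c <= first_term a1 a2 a3 w c.
Proof.
  intros H; unfold first_term; destruct c as [|c].
  - assert (a1 0%nat * v 1%nat <= a1 0%nat * w 1%nat) by (apply Rmult_le_compat_l; auto). lra.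
  - assert (a1 (S c) * v (S (S c)) <= a1 (S c) * w (S (S c))) by (apply Rmult_le_compat_l; auto).
    assert (a2 (S c) * v c <= a2 (S c) * w c) by (apply Rmult_le_compat_l; auto). lra.
Qed.

Lemma ft_nonneg w c : (forall c, 0 <= w c) -> 0 <= first_term a1 a2 a3 w c.
Proof.
  intros H; unfold first_term; destruct c as [|c].
  - assert (0 <= a1 0%nat * w 1%nat) by (apply Rmult_le_pos; auto). specialize (p3 0%nat); lra.
  - assert (0 <= a1 (S c) * w (S (S c))) by (apply Rmult_le_pos; auto).
    assert (0 <= a2 (S c) * w c) by (apply Rmult_le_pos; auto). specialize (p3 (S c)); lra.
Qed.

Lemma ft_step w c : (forall c, 0 <= w c) -> (forall c, w c <= w (S c)) ->
  first_term a1 a2 a3 w c <= first_term a1 a2 a3 w (S c).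
Proof.
  intros H0 H; unfold first_term; destruct c as [|c].
  - assert (a1 0%nat * w 1%nat <= a1 1%nat * w 2%nat) by (apply Rmult_le_compat; auto).
    assert (0 <= a2 1%nat * w 0%nat) by (apply Rmult_le_pos; auto). specialize (i3 0%nat); lra.
  - assert (a1 (S c) * w (S (S c)) <= a1 (S (S c)) * w (S (S (S c)))) by (apply Rmult_le_compat; auto).
    assert (a2 (S c) * w c <= a2 (S (S c)) * w (S c)) by (apply Rmult_le_compat; auto).
    specialize (i3 (S c)); lra.
Qed.

Lemma it_bounds n c : 0 <= it n c <= lam.
Proof.
  revert c; induction n; intro c; simpl; [lra|].
  unfold T. assert (0 <= first_term a1 a2 a3 (it n) c) by (apply ft_nonneg; intro; apply IHn).
  unfold Rmin; destruct Rle_dec; lra.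
Qed.

Lemma it_grow n c : it n c <= it (S n) c.
Proof.
  revert c; induction n; intro c.
  - simpl (it 0 c). apply it_bounds.
  - change (T (it n) c <= T (it (S n)) c). unfold T.
    assert (first_term a1 a2 a3 (it n) c <= first_term a1 a2 a3 (it (S n)) c) by (apply ft_mono; auto).
    unfold Rmin; repeat destruct Rle_dec; lra.
Qed.

Lemma it_mono_c n c : it n c <= it n (S c).
Proof.
  revert c; induction n; intro c; simpl; [lra|].
  unfold T. assert (first_term a1 a2 a3 (it n) c <= first_term a1 a2 a3 (it n) (S c)).
  { apply ft_step; auto. intro; apply it_bounds. }
  unfold Rmin; repeat destruct Rle_dec; lra.
Qed.

Lemma ft_cv (u : nat -> nat -> R) w : (forall c, Un_cv (fun n => u n c) (w c)) ->
  forall c, Un_cv (fun n => first_term a1 a2 a3 (u n) c) (first_term a1 a2 a3 w c).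
Proof.
  intros H c; unfold first_term; destruct c as [|c].
  - apply (CV_plus (fun n => a1 0%nat * u n 1%nat + 0) (fun _ => a3 0%nat)); [|apply cv_const].
    apply (CV_plus (fun n => a1 0%nat * u n 1%nat) (fun _ => 0)); [|apply cv_const].
    apply (CV_mult (fun _ => a1 0%nat)); [apply cv_const|apply H].
  - apply (CV_plus (fun n => a1 (S c) * u n (S (S c)) + a2 (S c) * u n c) (fun _ => a3 (S c))); [|apply cv_const].
    apply (CV_plus (fun n => a1 (S c) * u n (S (S c)))).
    + apply (CV_mult (fun _ => a1 (S c))); [apply cv_const|apply H].
    + apply (CV_mult (fun _ => a2 (S c))); [apply cv_const|apply H].
Qed.

Lemma uniq q v w : (forall c, a1 c + a2 c <= q) -> 0 <= q < 1 ->
  bounded_seq v -> bounded_seq w -> solves a1 a2 a3 lam v -> solves a1 a2 a3 lam w -> v = w.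
Proof.
  intros Hq Hq1 [Mv HMv] [Mw HMw] Hv Hw.
  assert (step : forall K, 0 <= K -> (forall c, Rabs (v c - w c) <= K) ->
            forall c, Rabs (v c - w c) <= q * K).
  { intros K HK H c. rewrite (Hv c), (Hw c).
    eapply Rle_trans; [apply rmin_lip|]. apply Rabs_le.
    unfold first_term; destruct c as [|c].
    - pose proof (rabs_btw _ _ (H 1%nat)). specialize (Hq 0%nat). specialize (p1 0%nat). specialize (p2 0%nat). nra.
    - pose proof (rabs_btw _ _ (H (S (S c)))). pose proof (rabs_btw _ _ (H c)).
      specialize (Hq (S c)). specialize (p1 (S c)). specialize (p2 (S c)). nra. }
  set (M := Mv + Mw).
  assert (HM0 : 0 <= M). { unfold M. pose proof (HMv 0%nat); pose proof (HMw 0%nat).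
    pose proof (Rabs_pos (v 0%nat)); pose proof (Rabs_pos (w 0%nat)); lra. }
  assert (Hn : forall n c, Rabs (v c - w c) <= q ^ n * M).
  { induction n; intro c.
    - simpl. rewrite Rmult_1_l. apply Rabs_le.
      pose proof (rabs_btw _ _ (HMv c)); pose proof (rabs_btw _ _ (HMw c)). unfold M; lra.
    - simpl. rewrite Rmult_assoc. apply step; auto. apply Rmult_le_pos; auto. apply pow_le; lra. }
  apply functional_extensionality; intro c.
  set (d := Rabs (v c - w c)).
  assert (d = 0).
  { destruct (Rle_dec d 0) as [Hd|Hd]. { pose proof (Rabs_pos (v c - w c)); unfold d in *; lra. }
    exfalso. destruct (pow_lt_1_zero q) with (y := d / (M + 1)) as [N HN].
    - rewrite Rabs_pos_eq; lra.
    - apply Rdiv_lt_0_compat; lra.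
    - specialize (HN N (le_n _)). rewrite Rabs_pos_eq in HN by (apply pow_le; lra).
      assert (q ^ N * (M + 1) < d / (M + 1) * (M + 1)) by (apply Rmult_lt_compat_r; lra).
      replace (d / (M + 1) * (M + 1)) with d in H by (field; lra).
      pose proof (Hn N c). fold d in H0. pose proof (pow_le q N (proj1 Hq1)). nra. }
  pose proof (rabs_btw (v c - w c) 0). unfold d in H. lra.
Qed.

End S.

Theorem lemma5p2 (a1 a2 a3 : nat -> R) (z1 z2 z3 lam : R)
  (h1 : admissible_coef a1) (h2 : admissible_coef a2) (h3 : admissible_coef a3)
  (hz1 : Un_cv a1 z1) (hz2 : Un_cv a2 z2) (hz3 : Un_cv a3 z3)
  (hlim : z1 + z2 < 1) (hlam : 0 < lam) :
  (exists w : nat -> R, bounded_seq w /\ solves a1 a2 a3 lam w /\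
     forall v : nat -> R, bounded_seq v -> solves a1 a2 a3 lam v -> v = w)
  /\
  (forall w : nat -> R, bounded_seq w -> solves a1 a2 a3 lam w ->
     (lam < z3 / (1 - z1 - z2) ->
        exists cs : nat, (1 <= cs)%nat /\
          forall c : nat, first_term a1 a2 a3 w c > lam <-> (cs <= c)%nat)
     /\
     (z3 / (1 - z1 - z2) <= lam ->
        forall c : nat, first_term a1 a2 a3 w c <= lam /\
                        w c = first_term a1 a2 a3 w c)).
Proof.
  destruct h1 as (p1 & _ & m1 & e1). destruct h2 as (p2 & _ & m2 & e2).
  destruct h3 as (p3 & _ & m3 & e3).
  assert (i1 : forall c, a1 c <= a1 (S c)) by (intro; apply m1; lia).
  assert (i2 : forall c, a2 c <= a2 (S c)) by (intro; apply m2; lia).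
  assert (i3 : forall c, a3 c <= a3 (S c)) by (intro; apply m3; lia).
  pose proof (growing_ineq a1 z1 i1 hz1) as b1.
  pose proof (growing_ineq a2 z2 i2 hz2) as b2.
  pose proof (growing_ineq a3 z3 i3 hz3) as b3.
  assert (z1p : 0 <= z1) by (specialize (b1 0%nat); lra).
  assert (z2p : 0 <= z2) by (specialize (b2 0%nat); lra).
  assert (z3p : 0 <= z3) by (specialize (b3 0%nat); lra).
  assert (Hq : forall c, a1 c + a2 c <= z1 + z2) by (intro c; specialize (b1 c); specialize (b2 c); lra).
  assert (Hq1 : 0 <= z1 + z2 < 1) by lra.
  assert (Hcv : forall c, {l | Un_cv (fun n => it a1 a2 a3 lam n c) l}).
  { intro c; apply growing_cv.
    - intro n; apply it_grow; auto.
    - exists lam; intros x [n Hx]; rewrite Hx; apply it_bounds; auto. }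
  set (w0 := fun c => proj1_sig (Hcv c)).
  assert (Hw0 : forall c, Un_cv (fun n => it a1 a2 a3 lam n c) (w0 c)) by (intro c; exact (proj2_sig (Hcv c))).
  assert (Hs0 : solves a1 a2 a3 lam w0).
  { intro c. apply (UL_sequence (fun n => it a1 a2 a3 lam (S n) c)).
    - apply (cv_shift (fun n => it a1 a2 a3 lam n c)); auto.
    - apply (cv_rmin (fun n => first_term a1 a2 a3 (it a1 a2 a3 lam n) c)).
      apply ft_cv; auto. }
  assert (w0p : forall c, 0 <= w0 c).
  { intro c. pose proof (growing_ineq _ _ (fun n => it_grow a1 a2 a3 lam p1 p2 p3 hlam n c) (Hw0 c) 0%nat).
    simpl in H; lra. }
  assert (w0l : forall c, w0 c <= lam) by (intro c; rewrite (Hs0 c); apply Rmin_r).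
  assert (w0m : forall c, w0 c <= w0 (S c)).
  { intro c. apply (cv_le2 _ _ _ _ (Hw0 c) (Hw0 (S c))). intro n; apply it_mono_c; auto. }
  assert (Hb0 : bounded_seq w0) by (exists lam; intro c; apply Rabs_le; specialize (w0p c); specialize (w0l c); lra).
  split.
  { exists w0; split; [auto|split; auto]. intros v Hv Hsv.
    apply (uniq a1 a2 a3 lam p1 p2 (z1 + z2)); auto. }
  intros w Hb Hs.
  assert (w = w0) by (apply (uniq a1 a2 a3 lam p1 p2 (z1 + z2)); auto). subst w.
  set (F := first_term a1 a2 a3 w0).
  assert (Fs : forall c, F c <= F (S c)) by (intro c; apply ft_step; auto).
  assert (Fm : forall c d, (c <= d)%nat -> F c <= F d).
  { intros c d H; induction H; [lra|]. eapply Rle_trans; eauto. }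
  assert (F0 : F 0%nat = 0) by (unfold F, first_term; rewrite e1, e3; ring).
  destruct (growing_cv w0 w0m) as [L HL].
  { exists lam; intros x [n Hx]; rewrite Hx; auto. }
  assert (Lle : L <= lam) by (apply (cv_le w0); auto).
  assert (HG : Un_cv (fun c => F (S c)) (z1 * L + z2 * L + z3)).
  { change (Un_cv (fun c => a1 (S c) * w0 (S (S c)) + a2 (S c) * w0 c + a3 (S c)) (z1 * L + z2 * L + z3)).
    apply (CV_plus (fun c => a1 (S c) * w0 (S (S c)) + a2 (S c) * w0 c) (fun c => a3 (S c))); [|apply (cv_shift a3); auto].
    apply (CV_plus (fun c => a1 (S c) * w0 (S (S c)))).
    - apply (CV_mult (fun c => a1 (S c))); [apply (cv_shift a1); auto|].
      apply (cv_shift (fun c => w0 (S c))). apply (cv_shift w0); auto.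
    - apply (CV_mult (fun c => a2 (S c))); [apply (cv_shift a2); auto|auto]. }
  pose proof (growing_ineq _ _ (fun c => Fs (S c)) HG) as FG.
  set (x := z3 / (1 - z1 - z2)).
  assert (Hx : x * (1 - z1 - z2) = z3) by (unfold x; field; lra).
  split.
  - intro Hlx.
    assert (Hex : exists c, F c > lam).
    { destruct (classic (exists c, F c > lam)) as [|Hn]; auto. exfalso.
      assert (Hle : forall c, F c <= lam).
      { intro c; destruct (Rle_dec (F c) lam); auto. exfalso; apply Hn; exists c; lra. }
      assert (Hw : Un_cv (fun c => w0 (S c)) (z1 * L + z2 * L + z3)).
      { intros e he; destruct (HG e he) as [N HN]; exists N; intros n hn.
        rewrite (Hs0 (S n)), Rmin_left by apply Hle. apply HN; auto. }
      pose proof (UL_sequence _ _ _ Hw (cv_shift w0 L HL)).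
      assert (L * (1 - z1 - z2) = x * (1 - z1 - z2)) by lra.
      assert (L = x) by (apply (Rmult_eq_reg_r (1 - z1 - z2)); auto; lra).
      lra. }
    destruct (dec_inh_nat_subset_has_unique_least_element (fun c => F c > lam)) as [cs [[Pcs Hmin] _]].
    { intro n; destruct (Rlt_dec lam (F n)); [left|right]; lra. }
    { exact Hex. }
    exists cs; split.
    + destruct cs; [rewrite F0 in Pcs; lra|lia].
    + intro c; split; [apply Hmin|]. intro H; pose proof (Fm _ _ H); fold F; lra.
  - intros Hxl c.
    assert (Hc : F c <= lam).
    { destruct (Rle_dec (F c) lam) as [|Hn]; auto. exfalso.
      pose proof (Fs c). pose proof (FG c).
      assert ((z1 + z2) * L <= (z1 + z2) * lam) by (apply Rmult_le_compat_l; lra).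
      assert (z3 <= lam * (1 - z1 - z2)) by (rewrite <- Hx; apply Rmult_le_compat_r; lra).
      lra. }
    split; [exact Hc|]. rewrite (Hs0 c). apply Rmin_left; exact Hc.
Qed.
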